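(* Let $k$ be a positive integer, let $D$ be a digraph containing no subdivision of $B(k,1;k)$, let $\mathcal{C}$ be a $k$-suitable collection of directed cycles of $D$, and let $C_1\in\mathcal{C}$. Then (i) $I^+(C_1)$ and $I^-(C_1)$ are vertex-disjoint; and (ii) for every $C_j\in\mathcal{C}\cap C_1$, $V(I^-(C_1))\cap V(C_j)=V(Q^-_j)$ and $V(I^+(C_1))\cap V(C_j)=V(Q^+_j)$.
   Context: A collection $\mathcal{C}$ of directed cycles is $k$-suitable if every cycle of $\mathcal{C}$ has length at least $8k$ and for any two distinct $C_i,C_j\in\mathcal{C}$, the set $V(C_i)\cap V(C_j)$ is either empty or the vertex set of a directed path $P_{i,j}$ with at most $k$ vertices which is a subpath of both $C_i$ and $C_j$; $s_{i,j}$, $t_{i,j}$ denote the initial and terminal vertices of $P_{i,j}$. For a directed cycle $C$ and vertices $a,b$ on it, $C[a,b]$ is the directed subpath of $C$ from $a$ to $b$, and $C[a,b[$, $C]a,b]$ denote it with $b$, respectively $a$, removed. $\mathcal{C}\cap C_1$ denotes the set of cycles of $\mathcal{C}$ other than $C_1$ that share a vertex with $C_1$. For $C_j\in\mathcal{C}\cap C_1$, $Q_j$ is the subpath of $C_j$ consisting of all vertices at distance at most $3k$ from $P_{1,j}$ along the cycle, so that $C_j[s(Q_j),s_{1,j}]$ and $C_j[t_{1,j},t(Q_j)]$ both have length $3k$ ($s(Q_j),t(Q_j)$ being its initial and terminal vertices); $Q^-_j=C_j[s(Q_j),s_{1,j}[$ and $Q^+_j=C_j]t_{1,j},t(Q_j)]$.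 Finally $I^+(C_1)=\bigcup_{C_j\in\mathcal{C}\cap C_1}Q^+_j$, $I^-(C_1)=\bigcup_{C_j\in\mathcal{C}\cap C_1}Q^-_j$ and $I(C_1)=C_1\cup\bigcup_{C_j\in\mathcal{C}\cap C_1}Q_j$ (unions of digraphs). A digraph contains a subdivision of $B(k_1,k_2;k_3)$ if there exist distinct vertices $u,w$ and three pairwise internally vertex-disjoint directed paths: two from $u$ to $w$ of lengths at least $k_1$ and $k_2$, and one from $w$ to $u$ of length at least $k_3$. *)

(* Defs.v *)
From mathcomp Require Import all_boot.
Set Implicit Arguments. Unset Strict Implicit. Unset Printing Implicit Defensive.

Section Digraphs.
Variable V : finType.
Variable E : rel V.

(* A directed path given by its start vertex [u] and the list [p] of the
   remaining vertices: vertices u :: p, arcs between consecutive vertices,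
   no repeated vertex.  Its length (number of arcs) is [size p]. *)
Definition dpath (u w : V) (p : seq V) : bool :=
  [&& path E u p, uniq (u :: p) & last u p == w].

Definition internal (u : V) (p : seq V) : seq V := behead (belast u p).

Definition disj (s t : seq V) : bool := ~~ has (mem t) s.

Definition has_subdiv_B (k1 k2 k3 : nat) : Prop :=
  exists (u w : V) (p1 p2 p3 : seq V),
    [/\ u != w,
        [/\ dpath u w p1, dpath u w p2 & dpath w u p3],
        [/\ k1 <= size p1, k2 <= size p2 & k3 <= size p3],
        p1 != p2 &
        [/\ disj (internal u p1) (internal u p2),
            disj (internal u p1) (internal w p3) &
            disj (internal u p2) (internal w p3)]].

Definition dcycle (c : seq V) : bool := uniq c && cycle E c.

(* k-suitable collection: cycles C i (i : 'I_m), together with the paths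
   P i j = P_{i,j} (only constrained when C i and C j meet). *)
Definition k_suitable (k m : nat) (C : 'I_m -> seq V)
    (P : 'I_m -> 'I_m -> seq V) : Prop :=
  (forall i, dcycle (C i) /\ 8 * k <= size (C i)) /\
  (forall i j, i != j ->
     (forall v, v \in C i -> v \notin C j) \/
     [/\ P i j != [::], size (P i j) <= k,
         (forall v, (v \in P i j) = (v \in C i) && (v \in C j)),
         (exists r, prefix (P i j) (rot r (C i))) &
         (exists r, prefix (P i j) (rot r (C j)))]).

Definition meets (c d : seq V) : bool := has (mem c) d.

(* Q^-_j = C_j[s(Q_j), s_{1,j}[ : the 3k vertices preceding s_{1,j} on C_j *)
Definition Qminus (k : nat) (c p : seq V) : seq V :=
  match p with
  | [::] => [::]
  | s :: _ => [seq iter d (prev c) s | d <- iota 1 (3 * k)]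
  end.

(* Q^+_j = C_j]t_{1,j}, t(Q_j)] : the 3k vertices following t_{1,j} on C_j *)
Definition Qplus (k : nat) (c p : seq V) : seq V :=
  match p with
  | [::] => [::]
  | s :: p' => [seq iter d (next c) (last s p') | d <- iota 1 (3 * k)]
  end.

Definition inIminus (k m : nat) (C : 'I_m -> seq V)
    (P : 'I_m -> 'I_m -> seq V) (i1 : 'I_m) (v : V) : Prop :=
  exists j, [/\ j != i1, meets (C i1) (C j) & v \in Qminus k (C j) (P i1 j)].

Definition inIplus (k m : nat) (C : 'I_m -> seq V)
    (P : 'I_m -> 'I_m -> seq V) (i1 : 'I_m) (v : V) : Prop :=
  exists j, [/\ j != i1, meets (C i1) (C j) & v \in Qplus k (C j) (P i1 j)].

End Digraphs.

(* Main.v *)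
Require Import Defs.
From mathcomp Require Import all_boot.
From mathcomp Require Import zify.
Set Implicit Arguments. Unset Strict Implicit. Unset Printing Implicit Defensive.


Lemma modeq3 n i j : 0 < n -> i < 3 * n -> j < 3 * n -> i %% n = j %% n ->
  i = j \/ i = j + n \/ j = i + n \/ i = j + 2 * n \/ j = i + 2 * n.
Proof.
move=> n0 hi hj e.
have qi : i %/ n < 3 by rewrite ltn_divLR.
have qj : j %/ n < 3 by rewrite ltn_divLR.
move: (divn_eq i n) (divn_eq j n) (ltn_pmod i n0) (ltn_pmod j n0) e qi qj.
move: (i %% n) (j %% n) (i %/ n) (j %/ n) => a b p q ei ej ha hb e.
case: p ei => [|[|[|]]] // ei _; case: q ej => [|[|[|]]] // ej _; lia.
Qed.

Section At.
Variable V : finType.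
Variable x0 : V.
Implicit Types c : seq V.

Definition at_ c i := nth x0 c (i %% size c).

Fixpoint carc c i d := if d is d'.+1 then at_ c i.+1 :: carc c i.+1 d' else [::].

Variable c : seq V.
Hypothesis Uc : uniq c.
Hypothesis n0 : 0 < size c.
Local Notation n := (size c).

Lemma at_addn i : at_ c (i + n) = at_ c i.
Proof. by rewrite /at_ modnDr. Qed.

Lemma at_mod i : at_ c (i %% n) = at_ c i.
Proof. by rewrite /at_ modn_mod. Qed.

Lemma at_mem i : at_ c i \in c.
Proof. by rewrite /at_ mem_nth // ltn_pmod. Qed.

Lemma mem_at x : x \in c -> exists2 i, i < n & x = at_ c i.
Proof.
move=> xc; exists (index x c); first by rewrite index_mem.
by rewrite /at_ modn_small ?index_mem // nth_index.
Qed.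

Lemma mem_at_base b x : x \in c -> exists2 i, i < n & x = at_ c (b + i).
Proof.
case/mem_at=> j jn ->.
have bn := ltn_pmod b n0.
have E1 : at_ c (b + (if b %% n <= j then j - b %% n else j + n - b %% n)) = at_ c j.
  rewrite -at_mod -modnDml; move: (b %% n) bn => a ha.
  case: ifP => h.
    by rewrite subnKC // at_mod.
  have -> : a + (j + n - a) = j + n by lia.
  by rewrite at_mod at_addn.
exists (if b %% n <= j then j - b %% n else j + n - b %% n) => //.
move: (b %% n) bn => a ha; case: ifP => h; lia.
Qed.

Lemma at_eq i j : at_ c i = at_ c j -> i %% n = j %% n.
Proof. by move/eqP; rewrite /at_ nth_uniq ?ltn_pmod // => /eqP. Qed.

Lemma at_shift i j d : at_ c i = at_ c j -> at_ c (i + d) = at_ c (j + d).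
Proof. by move/at_eq=> e; rewrite /at_ -modnDml e modnDml. Qed.

Lemma at_inj3 i j : i < 3 * n -> j < 3 * n -> at_ c i = at_ c j ->
  i = j \/ i = j + n \/ j = i + n \/ i = j + 2 * n \/ j = i + 2 * n.
Proof. by move=> hi hj /at_eq; apply: modeq3. Qed.

Lemma at_neq_shift i s : 0 < s < n -> at_ c (i + s) != at_ c i.
Proof.
move=> hs; apply/eqP=> /at_eq; rewrite -modnDml -[in RHS]modn_mod.
have := ltn_pmod i n0; move: (i %% n) => a ha e.
have := modeq3 n0 _ _ e; lia.
Qed.

Lemma next_at i : next c (at_ c i) = at_ c i.+1.
Proof.
rewrite next_nth at_mem.
have ix : index (at_ c i) c = i %% n by rewrite /at_ index_uniq ?ltn_pmod.
case: c Uc n0 ix => [|y p] //= _ _ ix. rewrite ix /at_ /=.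
have hi := ltn_pmod i (ltn0Sn (size p)).
move: (i %% (size p).+1) hi (modnDml i 1 (size p).+1) => a ha e.
rewrite -addn1 -e.
case: (ltnP a (size p)) => h.
  rewrite modn_small; last lia.
  by rewrite addn1 /=; apply: set_nth_default.
have -> : a = size p by clear e; lia.
by rewrite addn1 modnn /= nth_default.
Qed.

Lemma prev_at i : prev c (at_ c i.+1) = at_ c i.
Proof. by rewrite -next_at prev_next. Qed.

Lemma prev_at' i : prev c (at_ c i) = at_ c (i + n.-1).
Proof.
rewrite -(prev_at (i + n.-1)); have -> : (i + n.-1).+1 = i + n by lia.
by rewrite at_addn.
Qed.

Lemma iter_next d i : iter d (next c) (at_ c i) = at_ c (i + d).
Proof. elim: d => [|d IH] /=; first by rewrite addn0. by rewrite IH next_at addnS. Qed.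

Lemma iter_prev d i : d <= n -> iter d (prev c) (at_ c i) = at_ c (i + (n - d)).
Proof.
elim: d => [|d IH] /= h; first by rewrite subn0 at_addn.
rewrite IH; last lia.
rewrite prev_at'. rewrite -[in RHS]at_addn; congr (at_ c _); lia.
Qed.

Lemma E_at (E : rel V) i : cycle E c -> E (at_ c i) (at_ c i.+1).
Proof. by move=> cy; rewrite -next_at; apply: next_cycle => //; apply: at_mem. Qed.

Lemma mem_carc i d z : z \in carc c i d -> exists2 t, t < d & z = at_ c (i + t.+1).
Proof.
elim: d i => [|d IH] i //=; rewrite inE => /orP[/eqP->|/IH[t td ->]].
  by exists 0 => //; rewrite addn1.
by exists t.+1 => //; rewrite addSnnS.
Qed.

Lemma carc_mem i d t : t < d -> at_ c (i + t.+1) \in carc c i d.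
Proof.
elim: d i t => [|d IH] i [|t] //= h; rewrite inE.
  by rewrite addn1 eqxx.
by rewrite -addSnnS IH ?orbT.
Qed.

Lemma nth_carc i d t : t < d -> nth x0 (carc c i d) t = at_ c (i + t.+1).
Proof.
elim: d i t => [|d IH] i [|t] //= h; first by rewrite addn1.
by rewrite IH // addSnnS.
Qed.

Lemma size_carc i d : size (carc c i d) = d.
Proof. by elim: d i => [|d IH] i //=; rewrite IH. Qed.

Lemma last_carc i d : last (at_ c i) (carc c i d) = at_ c (i + d).
Proof. elim: d i => [|d IH] i /=; first by rewrite addn0. by rewrite IH addSnnS. Qed.

Lemma path_carc (E : rel V) i d : cycle E c -> path E (at_ c i) (carc c i d).
Proof. move=> cy; elim: d i => [|d IH] i //=; by rewrite E_at // IH. Qed.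

Lemma uniq_carc i d : d < n -> uniq (at_ c i :: carc c i d).
Proof.
elim: d i => [|d IH] i h //.
have U := IH i.+1 (ltnW h).
rewrite [carc _ _ _.+1]/= cons_uniq U andbT.
rewrite inE negb_or; apply/andP; split.
  by rewrite eq_sym -addn1 at_neq_shift //; lia.
apply/negP=> /mem_carc [t td] e.
have : at_ c (i + t.+2) != at_ c i by apply: at_neq_shift; lia.
by rewrite -addSnnS -e eqxx.
Qed.

Lemma dpath_carc (E : rel V) i d : cycle E c -> d < n ->
  dpath E (at_ c i) (at_ c (i + d)) (carc c i d).
Proof. by move=> cy dn; rewrite /dpath path_carc // uniq_carc // last_carc eqxx. Qed.

End At.


Ltac fixsz := repeat match goal with
  | H : context [@size (Equality.sort (fintype_Finite__to__eqtype_Equality ?W)) ?s] |- _ =>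
      progress change (@size (Equality.sort (fintype_Finite__to__eqtype_Equality W)) s) with (@size (Finite.sort W) s) in H
  | |- context [@size (Equality.sort (fintype_Finite__to__eqtype_Equality ?W)) ?s] =>
      progress change (@size (Equality.sort (fintype_Finite__to__eqtype_Equality W)) s) with (@size (Finite.sort W) s)
  end.
Ltac keep_arith := repeat match goal with
 | H : ?T |- _ => match type of T with Prop =>
      lazymatch T with
      | is_true (leq _ _) => fail
      | is_true (_ && _) => fail
      | @eq nat _ _ => fail
      | _ \/ _ => fail
      | _ /\ _ => fail
      | _ => clear H end end end.
Ltac nlia := fixsz; keep_arith; lia.

Section Inf2.
Variable V : finType.
Implicit Types c p q P : seq V.

Lemma prefix_size P s : prefix P s -> size P <= size s.
Proof. by rewrite prefixE => /eqP <-; rewrite size_take; case: ifP => // /ltnW. Qed.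

Lemma nth_rot_at (x0 : V) c r t : 0 < size c -> t < size c ->
  exists2 b, b < size c & nth x0 (rot r c) t = at_ x0 c (b + t).
Proof.
move=> n0 tn.
case: (ltnP r (size c)) => hr; last first.
  by exists 0 => //; rewrite rot_oversize // /at_ add0n modn_small.
exists r => //. rewrite /rot nth_cat size_drop /at_.
case: ifP => h.
  by rewrite nth_drop modn_small //; lia.
rewrite nth_take; last lia.
have -> : r + t = (t - (size c - r)) + size c by lia.
by rewrite modnDr modn_small //; lia.
Qed.

Lemma prefix_at (x0 : V) c P r : 0 < size c -> prefix P (rot r c) ->
  exists2 b, b < size c & forall t, t < size P -> nth x0 P t = at_ x0 c (b + t).
Proof.
move=> n0 hp; have sP : size P <= size c by have := prefix_size hp; rewrite size_rot.
move: hp; rewrite prefixE => /eqP hp.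
case: (ltnP r (size c)) => hr; last first.
  exists 0 => // t tP; rewrite -hp nth_take // rot_oversize // /at_ add0n modn_small //.
  lia.
exists r => // t tP; rewrite -hp nth_take // /rot nth_cat size_drop /at_.
case: ifP => h.
  by rewrite nth_drop modn_small //; lia.
rewrite nth_take; last lia.
have -> : r + t = (t - (size c - r)) + size c by lia.
by rewrite modnDr modn_small //; lia.
Qed.

Lemma memP (x0 : V) P x : x \in P -> exists2 t, t < size P & x = nth x0 P t.
Proof. by case/(nthP x0)=> t ht <-; exists t. Qed.

Lemma Qminus_at (x0 : V) k c P b v : uniq c -> 0 < size c -> 3 * k <= size c ->
  P != [::] -> nth x0 P 0 = at_ x0 c b ->
  (v \in Qminus k c P) = [exists d : 'I_(3 * k).+1, (0 < d) && (v == at_ x0 c (b + (size c - d)))].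
Proof.
move=> Uc n0 hk; case: P => [|s P] // _ /= hs.
apply/idP/existsP.
  case/mapP=> d; rewrite mem_iota => /andP[d1 d2] ->.
  have hd : d < (3*k).+1 by lia.
  exists (Ordinal hd) => /=.
  by rewrite d1 hs iter_prev ?eqxx //; nlia.
case=> [[d hd]] /= /andP[d0 /eqP ->].
apply/mapP; exists d; first by rewrite mem_iota; lia.
by rewrite hs iter_prev //; nlia.
Qed.

Lemma dpath_cat (E : rel V) u a w p q : dpath E u a p -> dpath E a w q ->
  (forall z, z \in q -> z \notin u :: p) -> dpath E u w (p ++ q).
Proof.
case/and3P=> p1 u1 /eqP l1; case/and3P=> p2 u2 /eqP l2 hd.
have U : uniq (u :: p ++ q).
  rewrite -cat_cons cat_uniq u1 /=.
  have -> : uniq q by move: u2; rewrite cons_uniq => /andP[].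
  rewrite andbT; apply/hasPn => z zq; exact: hd.
by rewrite /dpath cat_path p1 l1 p2 U last_cat l1 l2 eqxx.
Qed.

Lemma int_mem (u : V) p z : uniq (u :: p) ->
  (z \in internal u p) = [&& z \in p, z != u & z != last u p].
Proof.
case/lastP: p => [|q y] // U.
rewrite /internal belast_rcons /= last_rcons mem_rcons inE.
move: U; rewrite cons_uniq rcons_uniq mem_rcons inE negb_or => /andP[/andP[uy uq] /andP[hy _]].
have [->|zy] := eqVneq z y.
  by rewrite /= andbF (negbTE hy).
rewrite /= andbT; have [->|zu] := eqVneq z u; first by rewrite (negbTE uq).
by rewrite andbT.
Qed.

Lemma int_sub (u : V) p z : z \in internal u p -> z \in p.
Proof.
case/lastP: p => [|q y] //=.
by rewrite /internal belast_rcons /= mem_rcons inE => ->; rewrite orbT.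
Qed.

Lemma disjP (s t : seq V) : (forall z, z \in s -> z \in t -> False) -> disj s t.
Proof. move=> h; apply/hasPn => z zs; apply/negP => zt; exact: h zs zt. Qed.

End Inf2.


Section Core.
Variable V : finType.
Variable E : rel V.
Variable k : nat.
Variables c cj cl Pj Pl Pjl : seq V.
Variable v : V.
Hypothesis hk : 0 < k.
Hypothesis hB : ~ has_subdiv_B E k 1 k.
Hypothesis hc : dcycle E c.
Hypothesis hn : 8 * k <= size c.
Hypothesis hcj : dcycle E cj.
Hypothesis hnj : 8 * k <= size cj.
Hypothesis hcl : dcycle E cl.
Hypothesis hnl : 8 * k <= size cl.
Hypothesis Pj0 : Pj != [::].
Hypothesis Pjk : size Pj <= k.
Hypothesis Pjm : forall x, (x \in Pj) = (x \in c) && (x \in cj).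
Hypothesis Pjc : exists r, prefix Pj (rot r c).
Hypothesis Pjj : exists r, prefix Pj (rot r cj).
Hypothesis Pl0 : Pl != [::].
Hypothesis Plk : size Pl <= k.
Hypothesis Plm : forall x, (x \in Pl) = (x \in c) && (x \in cl).
Hypothesis Plc : exists r, prefix Pl (rot r c).
Hypothesis Pll : exists r, prefix Pl (rot r cl).
Hypothesis Pk : size Pjl <= k.
Hypothesis Pm : forall x, (x \in Pjl) = (x \in cj) && (x \in cl).
Hypothesis Pcj : exists r, prefix Pjl (rot r cj).
Hypothesis Pcl : exists r, prefix Pjl (rot r cl).
Hypothesis hv1 : v \in Qminus k cl Pl.
Hypothesis hv2 : v \in cj.
Hypothesis hv3 : v \notin Qminus k cj Pj.

Local Notation atc := (at_ v c).
Local Notation atj := (at_ v cj).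
Local Notation atl := (at_ v cl).

Lemma core : False.
Proof.
case/andP: hc => Uc cyc; case/andP: hcj => Uj cyj; case/andP: hcl => Ul cyl.
have n0 : 0 < size c by nlia.
have nj0 : 0 < size cj by nlia.
have nl0 : 0 < size cl by nlia.
have Lj0 : 0 < size Pj by rewrite lt0n size_eq0.
have Ll0 : 0 < size Pl by rewrite lt0n size_eq0.
case: Pjc => r1 h1; have [aj haj Ajc] := prefix_at v n0 h1.
case: Pjj => r2 h2; have [bj hbj Ajj] := prefix_at v nj0 h2.
case: Plc => r3 h3; have [al hal Alc] := prefix_at v n0 h3.
case: Pll => r4 h4; have [bl hbl All] := prefix_at v nl0 h4.
case: Pcj => r5 h5; have [r hr Rj] := prefix_at v nj0 h5.
case: Pcl => r6 h6; have [r' hr' Rl] := prefix_at v nl0 h6.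
clear h1 h2 h3 h4 h5 h6.
have inPj x : x \in Pj -> exists2 t, t < size Pj & x = atj (bj + t) /\ x = atc (aj + t).
  by case/(memP v)=> t ht ->; exists t => //; split; [exact: Ajj | exact: Ajc].
have inPl x : x \in Pl -> exists2 t, t < size Pl & x = atl (bl + t) /\ x = atc (al + t).
  by case/(memP v)=> t ht ->; exists t => //; split; [exact: All | exact: Alc].
have inP x : x \in Pjl -> exists2 t, t < size Pjl & x = atj (r + t) /\ x = atl (r' + t).
  by case/(memP v)=> t ht ->; exists t => //; split; [exact: Rj | exact: Rl].
have Pjat t : t < size Pj -> atj (bj + t) = atc (aj + t) /\ atj (bj + t) \in Pj.
  by move=> ht; split; [rewrite -Ajj // Ajc | rewrite -Ajj // mem_nth].
have Plat t : t < size Pl -> atl (bl + t) = atc (al + t) /\ atl (bl + t) \in Pl.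
  by move=> ht; split; [rewrite -All // Alc | rewrite -All // mem_nth].
have Pat t : t < size Pjl -> atj (r + t) = atl (r' + t) /\ atj (r + t) \in Pjl.
  by move=> ht; split; [rewrite -Rj // Rl | rewrite -Rj // mem_nth].
have [e [eg0 ek ve]] : exists e, [/\ 0 < e, e <= 3 * k & v = atl (bl + (size cl - e))].
  move: hv1; rewrite (Qminus_at (x0 := v) (b := bl)) //; last first.
  - by rewrite All // addn0.
  - nlia.
  case/existsP=> [[d hd]] /= /andP[d0 /eqP hvd]; exists d; split => //; nlia.
have [pv hpv vj] := mem_at_base v Uj nj0 bj hv2.
have vcl : v \in cl by rewrite [X in X \in _]ve; apply: at_mem.
have vc : v \notin c.
  apply/negP=> vc; have : v \in Pl by rewrite Plm vc vcl.
  case/inPl=> t ht [vt _]; move: vt; rewrite [X in X = _]ve => /(at_inj3 Ul) h.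
  have := h ltac:(nlia) ltac:(nlia); nlia.
have Ij i j : atj i = atj j -> i < 3 * size cj -> j < 3 * size cj ->
  i = j \/ i = j + size cj \/ j = i + size cj \/ i = j + 2 * size cj \/ j = i + 2 * size cj.
  by move=> h hi hj; exact: at_inj3 Uj nj0 i j hi hj h.
have Il i j : atl i = atl j -> i < 3 * size cl -> j < 3 * size cl ->
  i = j \/ i = j + size cl \/ j = i + size cl \/ i = j + 2 * size cl \/ j = i + 2 * size cl.
  by move=> h hi hj; exact: at_inj3 Ul nl0 i j hi hj h.
have Ic i j : atc i = atc j -> i < 3 * size c -> j < 3 * size c ->
  i = j \/ i = j + size c \/ j = i + size c \/ i = j + 2 * size c \/ j = i + 2 * size c.
  by move=> h hi hj; exact: at_inj3 Uc n0 i j hi hj h.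
have shj i j d : atj i = atj j -> atj (i + d) = atj (j + d) by exact: at_shift Uj nj0 i j d.
have shl i j d : atl i = atl j -> atl (i + d) = atl (j + d) by exact: at_shift Ul nl0 i j d.
have shc i j d : atc i = atc j -> atc (i + d) = atc (j + d) by exact: at_shift Uc n0 i j d.
have cgj i j : i = j -> atj i = atj j by move->.
have cgl i j : i = j -> atl i = atl j by move->.
have cgc i j : i = j -> atc i = atc j by move->.
have adj i : atj (i + size cj) = atj i by exact: at_addn.
have adl i : atl (i + size cl) = atl i by exact: at_addn.
have adc i : atc (i + size c) = atc i by exact: at_addn.
have Ljpv : size Pj <= pv.
  rewrite leqNgt; apply/negP=> h.
  have [_ hm] := Pjat pv h.
  by move: hm; rewrite -vj Pjm (negbTE vc).
have pv3 : pv + 3 * k < size cj.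
  rewrite ltnNge; apply/negP=> h; move/negP: hv3; apply.
  have h3k : 3 * k <= size cj by nlia.
  rewrite (Qminus_at (x0:=v) (k:=k) (c:=cj) (P:=Pj) (b:=bj) v Uj nj0 h3k Pj0); last by rewrite Ajj // addn0.
  apply/existsP. have hd : size cj - pv < (3*k).+1 by nlia.
  exists (Ordinal hd) => /=.
  apply/andP; split; first by nlia.
  apply/eqP; rewrite [X in X = _]vj; apply: cgj; nlia.
have vP : v \in Pjl by rewrite Pm hv2 vcl.
have [t0 ht0 [vr vr']] := inP v vP.
have xj : atj (bj + (pv + (size Pjl - 1 - t0))) = atj (r + (size Pjl).-1).
  have e1 : atj (bj + pv) = atj (r + t0) by rewrite -vj -vr.
  move/(shj _ _ (size Pjl - 1 - t0)): e1; rewrite addnA => ->; apply: cgj; nlia.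
have xl : atl (bl + (size cl - e) + (size Pjl - 1 - t0)) = atl (r' + (size Pjl).-1).
  have e1 : atl (bl + (size cl - e)) = atl (r' + t0) by rewrite -ve -vr'.
  move/(shl _ _ (size Pjl - 1 - t0)): e1 => ->; apply: cgl; nlia.
have xjl : atj (r + (size Pjl).-1) = atl (r' + (size Pjl).-1).
  have hL : (size Pjl).-1 < size Pjl by nlia.
  exact: (Pat _ hL).1.
have de : size Pjl - 1 - t0 < e.
  rewrite ltnNge; apply/negP=> h.
  have sl : atl (r' + (t0 + e)) = atl bl.
    have e1 : atl (r' + t0) = atl (bl + (size cl - e)) by rewrite -ve -vr'.
    move/(shl _ _ e): e1; rewrite addnA => ->; rewrite -[RHS]adl; apply: cgl; nlia.
  have sj : atj (r + (t0 + e)) = atj (bj + (pv + e)).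
    have e1 : atj (r + t0) = atj (bj + pv) by rewrite -vj -vr.
    by move/(shj _ _ e): e1; rewrite !addnA.
  have [h1 _] := Pat (t0 + e) ltac:(nlia).
  have slc : atl bl \in c.
    have [h2 h3] := Plat 0 Ll0; move: h3; rewrite addn0 Plm => /andP[] //.
  have : atj (bj + (pv + e)) \in Pj by rewrite Pjm at_mem // andbT -sj h1 sl.
  case/inPj=> t ht [h4 _]; have := Ij _ _ h4; nlia.
have [px epx] : exists px, px = pv + (size Pjl - 1 - t0) by eexists.
have [pxl epxl] : exists pxl, pxl = bl + (size cl - e) + (size Pjl - 1 - t0) by eexists.
rewrite -epx in xj; rewrite -epxl in xl.
have hxl : atj (bj + px) = atl pxl by rewrite xj xjl xl.
have [sj0 _] := Pjat 0 Lj0; rewrite !addn0 in sj0.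
have [ty [dC [hty hdC yE K2]]] : exists ty dC, [/\ ty < size Pl, dC < size c,
    atc (aj + dC) = atl (bl + ty) & forall m, m < dC -> atc (aj + m) \notin cl].
  case: (boolP (atc aj \in cl)) => hs.
    have : atc aj \in Pl by rewrite Plm at_mem.
    case/inPl => ty hty [h1 _]; exists ty, 0.
    split; [exact: hty | nlia | by rewrite addn0 | by move=> m; rewrite ltn0].
  have [dC [hdC hdCe]] : exists dC, dC < size c /\ (aj + dC = al \/ aj + dC = al + size c).
    by case: (leqP aj al) => h; [exists (al - aj) | exists (al + size c - aj)]; nlia.
  have yal : atc (aj + dC) = atc al by case: hdCe => ->; [|rewrite adc].
  have [h1 _] := Plat 0 Ll0; rewrite !addn0 in h1.
  exists 0, dC; split; [nlia | exact: hdC | by rewrite yal -h1 addn0 | ].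
  move=> [|m] hm; first by rewrite addn0.
  apply/negP=> hmcl.
  have : atc (aj + m.+1) \in Pl by rewrite Plm at_mem.
  case/inPl => t ht [_ h2].
  have sjal : atc (al + (size c - dC)) = atc aj.
    move/(shc _ _ (size c - dC)): yal => <-; rewrite -[RHS]adc; apply: cgc; nlia.
  have ht' : size c - dC < size Pl by have := Ic _ _ h2; nlia.
  have [h4 h5] := Plat _ ht'.
  by move: hs; rewrite -sjal -h4; move: h5; rewrite Plm => /andP[_ ->].
have K s : 0 < s < size cj - px -> atj (bj + px + s) \notin cl.
  move=> hs; apply/negP=> h.
  have : atj (bj + px + s) \in Pjl by rewrite Pm at_mem.
  case/inP => t ht [h1 h2].
  have hwr : s + (size Pjl - 1 - t) = size cj.
    have := Ij _ _ xj; have := Ij _ _ h1; nlia.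
  have ht2 : size Pjl - 1 - px < size Pjl by nlia.
  have sjr : atj bj = atj (r + (size Pjl - 1 - px)).
    move/(shj _ _ (size cj - px)): xj.
    have -> : bj + px + (size cj - px) = bj + size cj by nlia.
    rewrite adj => ->; rewrite -[RHS]adj; apply: cgj; nlia.
  have [h3 _] := Pat _ ht2.
  have : atj bj \in Pl.
    by rewrite Plm; apply/andP; split; [rewrite sj0 at_mem | rewrite sjr h3 at_mem].
  case/inPl => t3 ht3 [h4 _].
  have h5 : atl (r' + (size Pjl - 1 - px)) = atl (bl + t3) by rewrite -h3 -sjr.
  move/(shl _ _ px): h5; have -> : r' + (size Pjl - 1 - px) + px = r' + (size Pjl).-1 by nlia.
  rewrite -xl => h6; have := Il _ _ h6; nlia.
have [d2 ed2] : exists d2, d2 = bl + size cl + ty - pxl by eexists.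
set p1 := @carc _ v cj (bj + px) (size cj - px) ++ @carc _ v c aj dC.
set p2 := @carc _ v cl pxl d2.
set p3 := @carc _ v cl (bl + ty) (size cl - d2).
have D1 : dpath E (atj (bj + px)) (atc (aj + dC)) p1.
  apply: (dpath_cat (a := atc aj)).
  - have := @dpath_carc _ v _ Uj nj0 E (bj + px) (size cj - px) cyj ltac:(nlia).
    have -> : atj (bj + px + (size cj - px)) = atc aj.
      by rewrite -sj0 -[RHS]adj; apply: cgj; nlia.
    by [].
  - have := @dpath_carc _ v _ Uc n0 E (aj) (dC) cyc hdC; by [].
  move=> z /mem_carc [m hm ->]; apply/negP=> hz.
  have [s hs hzs] : exists2 s, s <= size cj - px & atc (aj + m.+1) = atj (bj + px + s).
    move: hz; rewrite inE => /orP[/eqP h|/mem_carc [s hs h]].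
      by exists 0; rewrite ?addn0.
    by exists s.+1; rewrite // addnA.
  have hzcj : atc (aj + m.+1) \in cj by rewrite hzs at_mem.
  have : atc (aj + m.+1) \in Pj by rewrite Pjm hzcj at_mem.
  case/inPj => t ht [h1 h2].
  have := Ic _ _ h2; rewrite hzs in h1; have := Ij _ _ h1; nlia.
have D2 : dpath E (atj (bj + px)) (atc (aj + dC)) p2.
  rewrite hxl yE; have := @dpath_carc _ v _ Ul nl0 E (pxl) (d2) cyl ltac:(nlia).
  by have -> : atl (pxl + d2) = atl (bl + ty) by rewrite -[RHS]adl; apply: cgl; nlia.
have D3 : dpath E (atc (aj + dC)) (atj (bj + px)) p3.
  rewrite hxl yE; have := @dpath_carc _ v _ Ul nl0 E (bl + ty) (size cl - d2) cyl ltac:(nlia).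
  by have -> : atl (bl + ty + (size cl - d2)) = atl pxl by apply: cgl; nlia.
have pxn : px < size cj by nlia.
have xnc : atj (bj + px) \notin c.
  apply/negP=> h.
  have : atj (bj + px) \in Pj by rewrite Pjm h at_mem.
  case/inPj => t ht [h1 _]; have := Ij _ _ h1; nlia.
have U1 : uniq (atj (bj + px) :: p1) by case/and3P: D1.
have U2 : uniq (atj (bj + px) :: p2) by case/and3P: D2.
have U3 : uniq (atc (aj + dC) :: p3) by case/and3P: D3.
have L1 : last (atj (bj + px)) p1 = atc (aj + dC) by case/and3P: D1 => _ _ /eqP.
have L2 : last (atj (bj + px)) p2 = atc (aj + dC) by case/and3P: D2 => _ _ /eqP.
have L3 : last (atc (aj + dC)) p3 = atj (bj + px) by case/and3P: D3 => _ _ /eqP.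
have I1 z : z \in internal (atj (bj + px)) p1 -> z \notin cl.
  rewrite int_mem // L1 => /and3P[zp _ zy].
  move: zp; rewrite mem_cat => /orP[/mem_carc [s hs hz]|/mem_carc [m hm hz]].
    case: (ltnP s.+1 (size cj - px)) => hs1.
      by rewrite hz; apply: K; nlia.
    have hz' : z = atc (aj + 0).
      by rewrite hz addn0 -sj0 -[RHS]adj; apply: cgj; nlia.
    case: (posnP dC) => hd.
      by move: zy; rewrite hz' hd eqxx.
    by rewrite hz'; apply: K2.
  case: (ltnP m.+1 dC) => hm1; first by rewrite hz; apply: K2.
  have e1 : m.+1 = dC by nlia.
  by move: zy; rewrite hz e1 eqxx.
have C2 z : z \in p2 -> z \in cl by move/mem_carc => [s _ ->]; apply: at_mem.
have C3 z : z \in p3 -> z \in cl by move/mem_carc => [s _ ->]; apply: at_mem.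
apply: hB.
exists (atj (bj + px)), (atc (aj + dC)), p1, p2, p3.
split.
- by apply/eqP=> h; move: xnc; rewrite h at_mem.
- by split.
- rewrite /p1 /p2 /p3 size_cat !size_carc; split; nlia.
- apply/eqP=> h.
  have : nth v p1 0 = nth v p2 0 by rewrite h.
  rewrite /p1 /p2 nth_cat size_carc ifT; last by nlia.
  rewrite !nth_carc; [|nlia|nlia] => h2.
  have := K 1 ltac:(nlia); rewrite h2 at_mem //.
- split.
  + apply: disjP => z /I1 h /int_sub /C2 h'; by rewrite h' in h.
  + apply: disjP => z /I1 h /int_sub /C3 h'; by rewrite h' in h.
  + apply: disjP => z.
    rewrite int_mem // L2 => /and3P[/mem_carc [s hs ->] _ hy].
    rewrite int_mem // L3 => /and3P[/mem_carc [s' hs' h] _ hx].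
    have hs1 : s.+1 < d2.
      have ey : atl (pxl + d2) = atl (bl + ty) by rewrite -[RHS]adl; apply: cgl; nlia.
      rewrite ltn_neqAle hs andbT; apply/eqP=> es; move: hy; by rewrite yE es ey eqxx.
    have hs1' : s'.+1 < size cl - d2.
      have ey : atl (bl + ty + (size cl - d2)) = atl pxl by apply: cgl; nlia.
      rewrite ltn_neqAle hs' andbT; apply/eqP=> es; move: hx; by rewrite h hxl es ey eqxx.
    have := Il _ _ h; nlia.
Qed.
End Core.


Section Rev.
Variable V : finType.
Implicit Types c p q P : seq V.

Lemma dcycle_rev (E : rel V) c : dcycle E c -> dcycle (fun x y => E y x) (rev c).
Proof. by rewrite /dcycle rev_uniq rev_cycle. Qed.

Lemma prefix_rev_rot P c r : prefix P (rot r c) -> exists r', prefix (rev P) (rot r' (rev c)).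
Proof.
case/prefixP=> t ht.
have hc : rev c = rot r (rev t ++ rev P).
  by rewrite -rev_cat -ht -rev_rotr rotK.
have hx : rev t ++ rev P = rotr r (rev c) by rewrite hc rotK.
exists (rot_add (rev c) (size (rev c) - r) (size (rev t))).
rewrite -rot_rot_add -/(rotr r (rev c)) -hx rot_size_cat.
exact: prefix_prefix.
Qed.

Lemma Qminus_rev k c P : uniq c -> Qminus k (rev c) (rev P) = Qplus k c P.
Proof.
move=> Uc; case: P => [|s p] //=.
have -> : rev (s :: p) = last s p :: rev (belast s p) by rewrite lastI rev_rcons.
rewrite /=; apply: eq_map => d; apply: eq_iter; exact: prev_rev.
Qed.

Lemma disj_eqi (s s' t t' : seq V) : s =i s' -> t =i t' -> disj s t = disj s' t'.
Proof.
move=> hs ht; rewrite /disj (eq_has_r hs); congr (~~ _); apply: eq_has => z.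
by rewrite /= ht.
Qed.

Lemma dpath_rev (E : rel V) (u w : V) p : dpath (fun x y => E y x) u w p ->
  dpath E w u (rev (belast u p)).
Proof.
case/and3P=> hp hu /eqP hl.
have hw : w :: rev (belast u p) = rev (u :: p).
  by rewrite -rev_rcons -hl -lastI.
rewrite /dpath; apply/and3P; split.
- by rewrite -hl rev_path.
- by rewrite hw rev_uniq.
- by rewrite -(last_cons u) hw rev_cons last_rcons.
Qed.

Lemma internal_rev (u w : V) p : uniq (u :: p) -> last u p = w ->
  internal w (rev (belast u p)) =i internal u p.
Proof.
move=> U hl z.
have hw : w :: rev (belast u p) = rev (u :: p).
  by rewrite -rev_rcons -hl -lastI.
have U' : uniq (w :: rev (belast u p)) by rewrite hw rev_uniq.
have hl' : last w (rev (belast u p)) = u by rewrite -(last_cons u) hw rev_cons last_rcons.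
rewrite int_mem // int_mem // hl' hl mem_rev.
have hm : (z \in u :: p) = (z \in belast u p) || (z == w).
  by rewrite lastI mem_rcons inE hl orbC.
move: hm; rewrite inE.
by case: (z == u); case: (z == w); rewrite ?orbF ?orbT ?andbF ?andbT //= => ->.
Qed.

Lemma subdiv_flip (E : rel V) k1 k2 k3 :
  has_subdiv_B (fun x y => E y x) k1 k2 k3 -> has_subdiv_B E k1 k2 k3.
Proof.
case=> u [w [p1 [p2 [p3 [uw [D1 D2 D3] [s1 s2 s3] p12 [d12 d13 d23]]]]]].
have l1 : last u p1 = w by case/and3P: D1 => _ _ /eqP.
have l2 : last u p2 = w by case/and3P: D2 => _ _ /eqP.
have l3 : last w p3 = u by case/and3P: D3 => _ _ /eqP.
have U1 : uniq (u :: p1) by case/and3P: D1.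
have U2 : uniq (u :: p2) by case/and3P: D2.
have U3 : uniq (w :: p3) by case/and3P: D3.
exists w, u, (rev (belast u p1)), (rev (belast u p2)), (rev (belast w p3)).
split.
- by rewrite eq_sym.
- by split; apply: dpath_rev.
- by rewrite !size_rev !size_belast.
- apply/eqP=> h; move/eqP: p12; apply.
  have hb : belast u p1 = belast u p2 by rewrite -(revK (belast u p1)) h revK.
  have : u :: p1 = u :: p2 by rewrite lastI [in RHS]lastI l1 l2 hb.
  by case.
- split.
  + by rewrite (disj_eqi (internal_rev U1 l1) (internal_rev U2 l2)).
  + by rewrite (disj_eqi (internal_rev U1 l1) (internal_rev U3 l3)).
  + by rewrite (disj_eqi (internal_rev U2 l2) (internal_rev U3 l3)).
Qed.

End Rev.


Section Main.
Variable V : finType.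
Implicit Types c p q P : seq V.

Lemma Qminus_sub k c P z : {subset P <= c} -> z \in Qminus k c P -> z \in c.
Proof.
case: P => [|s p] //= hs /mapP [d _ ->].
have : s \in c by apply: hs; rewrite inE eqxx.
by elim: d => [|d IH] //= h; rewrite mem_prev IH.
Qed.

Lemma Qplus_sub k c P z : {subset P <= c} -> z \in Qplus k c P -> z \in c.
Proof.
case: P => [|s p] //= hs /mapP [d _ ->].
have : last s p \in c by apply: hs; exact: mem_last.
by elim: d => [|d IH] //= h; rewrite mem_next IH.
Qed.

Lemma Qplus_at (x0 : V) k c P b z : uniq c -> 0 < size c ->
  (forall t, t < size P -> nth x0 P t = at_ x0 c (b + t)) ->
  z \in Qplus k c P -> exists d, [/\ 0 < d, d <= 3 * k & z = at_ x0 c (b + (size P).-1 + d)].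
Proof.
move=> Uc n0 hP; case: P hP => [|s p] //= hP /mapP [d hd ->].
exists d; move: hd; rewrite mem_iota => /andP[d1 d2]; split; [lia|lia|].
have -> : last s p = nth x0 (s :: p) (size p) by rewrite (nth_last x0 (s :: p)).
by rewrite hP // iter_next.
Qed.

Lemma QpQm k c P r z : 0 < k -> uniq c -> 8 * k <= size c -> P != [::] -> size P <= k ->
  prefix P (rot r c) -> z \in Qplus k c P -> z \notin Qminus k c P.
Proof.
move=> hk Uc hn P0 Pk hp hz.
have n0 : 0 < size c by nlia.
have [b hb hP] := prefix_at z n0 hp.
have L0 : 0 < size P by rewrite lt0n size_eq0.
have [d [d1 d2 ->]] := Qplus_at Uc n0 hP hz.
have h3 : 3 * k <= size c by nlia.
rewrite (Qminus_at (x0:=z) (k:=k) (c:=c) (P:=P) (b:=b) _ Uc n0 h3 P0); last by rewrite hP // addn0.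
apply/existsP=> [[[d' hd'] /= /andP[d0 /eqP h]]].
have := @at_inj3 _ z c Uc n0 (b + (size P).-1 + d) (b + (size c - d')).
move=> /(_ _ _ h); nlia.
Qed.

Lemma pairP (E : rel V) k m (C : 'I_m -> seq V) (P : 'I_m -> 'I_m -> seq V) i j :
  k_suitable E k C P -> i != j -> meets (C i) (C j) ->
  [/\ P i j != [::], size (P i j) <= k,
      (forall v, (v \in P i j) = (v \in C i) && (v \in C j)),
      (exists r, prefix (P i j) (rot r (C i))) &
      (exists r, prefix (P i j) (rot r (C j)))].
Proof.
case=> _ hp ij hm; case: (hp i j ij) => // hd.
exfalso; case/hasP: hm => x xj xi; move: (hd x xi); by rewrite xj.
Qed.

Lemma core_app (E : rel V) k m (C : 'I_m -> seq V) (P : 'I_m -> 'I_m -> seq V) i1 j l v :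
  0 < k -> ~ has_subdiv_B E k 1 k -> k_suitable E k C P ->
  j != i1 -> l != i1 -> j != l -> meets (C i1) (C j) -> meets (C i1) (C l) ->
  v \in Qminus k (C l) (P i1 l) -> v \in C j -> v \notin Qminus k (C j) (P i1 j) -> False.
Proof.
move=> hk hB hs hj hl hjl mj ml hv1 hv2 hv3.
have hs' := hs; case: hs' => hcyc _.
have [Pj0 Pjk Pjm Pjc Pjj] := pairP hs (i:=i1) (j:=j) ltac:(by rewrite eq_sym) mj.
have [Pl0 Plk Plm Plc Pll] := pairP hs (i:=i1) (j:=l) ltac:(by rewrite eq_sym) ml.
have vl : v \in C l by apply: Qminus_sub hv1 => x; rewrite Plm => /andP[].
have mjl : meets (C j) (C l) by apply/hasP; exists v.
have [_ Pk Pm Pcj Pcl] := pairP hs hjl mjl.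
case: (hcyc i1) => c1 n1; case: (hcyc j) => c2 n2; case: (hcyc l) => c3 n3.
exact: (core hk hB c1 n1 c2 n2 c3 n3 Pj0 Pjk Pjm Pjc Pjj Pl0 Plk Plm Plc Pll Pk Pm Pcj Pcl hv1 hv2 hv3).
Qed.

Lemma core_app_plus (E : rel V) k m (C : 'I_m -> seq V) (P : 'I_m -> 'I_m -> seq V) i1 j l v :
  0 < k -> ~ has_subdiv_B E k 1 k -> k_suitable E k C P ->
  j != i1 -> l != i1 -> j != l -> meets (C i1) (C j) -> meets (C i1) (C l) ->
  v \in Qplus k (C l) (P i1 l) -> v \in C j -> v \notin Qplus k (C j) (P i1 j) -> False.
Proof.
move=> hk hB hs hj hl hjl mj ml hv1 hv2 hv3.
have hs' := hs; case: hs' => hcyc _.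
have [Pj0 Pjk Pjm [rj1 Pjc] [rj2 Pjj]] := pairP hs (i:=i1) (j:=j) ltac:(by rewrite eq_sym) mj.
have [Pl0 Plk Plm [rl1 Plc] [rl2 Pll]] := pairP hs (i:=i1) (j:=l) ltac:(by rewrite eq_sym) ml.
have vl : v \in C l by apply: Qplus_sub hv1 => x; rewrite Plm => /andP[].
have mjl : meets (C j) (C l) by apply/hasP; exists v.
have [_ Pk Pm [r1 Pcj] [r2 Pcl]] := pairP hs hjl mjl.
case: (hcyc i1) => c1 n1; case: (hcyc j) => c2 n2; case: (hcyc l) => c3 n3.
have hB' : ~ has_subdiv_B (fun x y => E y x) k 1 k by move/subdiv_flip.
have U1 : uniq (C i1) by case/andP: c1.
have U2 : uniq (C j) by case/andP: c2.
have U3 : uniq (C l) by case/andP: c3.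
apply: (@core V (fun x y => E y x) k (rev (C i1)) (rev (C j)) (rev (C l))
   (rev (P i1 j)) (rev (P i1 l)) (rev (P j l)) v hk hB').
- exact: dcycle_rev.
- by rewrite size_rev.
- exact: dcycle_rev.
- by rewrite size_rev.
- exact: dcycle_rev.
- by rewrite size_rev.
- by rewrite -size_eq0 size_rev size_eq0.
- by rewrite size_rev.
- by move=> x; rewrite !mem_rev Pjm.
- exact: prefix_rev_rot Pjc.
- exact: prefix_rev_rot Pjj.
- by rewrite -size_eq0 size_rev size_eq0.
- by rewrite size_rev.
- by move=> x; rewrite !mem_rev Plm.
- exact: prefix_rev_rot Plc.
- exact: prefix_rev_rot Pll.
- by rewrite size_rev.
- by move=> x; rewrite !mem_rev Pm.
- exact: prefix_rev_rot Pcj.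
- exact: prefix_rev_rot Pcl.
- by rewrite Qminus_rev.
- by rewrite mem_rev.
- by rewrite Qminus_rev.
Qed.

End Main.

Unset Implicit Arguments.

Theorem mainTheorem13 (V : finType) (E : rel V) (k m : nat)
    (C : 'I_m -> seq V) (P : 'I_m -> 'I_m -> seq V) (i1 : 'I_m) :
  0 < k ->
  ~ has_subdiv_B E k 1 k ->
  k_suitable E k C P ->
  (forall v, ~ (inIplus k C P i1 v /\ inIminus k C P i1 v)) /\
  (forall j, j != i1 -> meets (C i1) (C j) ->
     (forall v, (inIminus k C P i1 v /\ v \in C j) <-> v \in Qminus k (C j) (P i1 j)) /\
     (forall v, (inIplus k C P i1 v /\ v \in C j) <-> v \in Qplus k (C j) (P i1 j))).
Proof.
move=> hk hB hs.
have hs' := hs; case: hs' => hcyc _.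
have PJ j : j != i1 -> meets (C i1) (C j) -> _ :=
  fun h1 h2 => pairP hs (i:=i1) (j:=j) ltac:(by rewrite eq_sym) h2.
split.
  move=> v [[j [hj1 mj vj]] [l [hl1 ml vl]]].
  have [Pj0 Pjk Pjm [rj1 Pjc] [rj2 Pjj]] := PJ j hj1 mj.
  have Uj : uniq (C j) by case: (hcyc j) => /andP[].
  have hnj : 8 * k <= size (C j) by case: (hcyc j).
  have nq := QpQm hk Uj hnj Pj0 Pjk Pjj vj.
  case: (eqVneq j l) => [ejl|njl].
    by move: nq; rewrite ejl vl.
  apply: (core_app hk hB hs hj1 hl1 njl mj ml vl) => //.
  by apply: Qplus_sub vj => x; rewrite Pjm => /andP[].
move=> j hj mj.
have [Pj0 Pjk Pjm [rj1 Pjc] [rj2 Pjj]] := PJ j hj mj.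
have sub x : x \in P i1 j -> x \in C j by rewrite Pjm => /andP[].
split=> v; split.
- case=> [[l [hl1 ml vl]] vj].
  case: (eqVneq l j) => [<-//|nlj].
  case: (boolP (v \in Qminus k (C j) (P i1 j))) => // h; exfalso.
  exact: (core_app hk hB hs hj hl1 ltac:(by rewrite eq_sym) mj ml vl vj h).
- by move=> h; split; [exists j | apply: Qminus_sub h].
- case=> [[l [hl1 ml vl]] vj].
  case: (eqVneq l j) => [<-//|nlj].
  case: (boolP (v \in Qplus k (C j) (P i1 j))) => // h; exfalso.
  exact: (core_app_plus hk hB hs hj hl1 ltac:(by rewrite eq_sym) mj ml vl vj h).
- by move=> h; split; [exists j | apply: Qplus_sub h].
Qed.
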